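(* Let $F$ be a commutative field, $n\ge 3$, let $K$ be a linear complex of planes in $\mathrm{PG}(n,F)$ having no singular line, let $H$ be a hyperplane of $\mathrm{PG}(n,F)$ and let $\mathcal F_H$ be the set of all lines whose polar hyperplane is $H$ (a line spread of $H$). Put $M=(n^2+n-2)/2$. Then $\mathcal F_H$ is linear; more precisely, $\mathcal F_H^{\wp_{n,1}}=R\cap\mathcal G_{n,1}$ for some $(M-n)$-subspace $R$ of $\mathrm{PG}(M,F)$. Furthermore, if $F$ is quadratically closed or $F$ is finite, then $\mathcal F_H$ is not geometric.
   Context: A linear complex of planes of $\mathrm{PG}(n,F)$ is the set of planes whose Plücker image ($F(v_0\wedge v_1\wedge v_2)$) lies in a fixed hyperplane of $\mathbb P(\bigwedge^3F^{n+1})$. A line is singular for $K$ if every plane through it is in $K$; for a non-singular line $\ell$ the polar hyperplane is the unique hyperplane $E$ such that a plane through $\ell$ is in $K$ iff it lies in $E$. $\wp_{n,1}$ is the Plücker embedding of lines of $\mathrm{PG}(n,F)$ into $\mathrm{PG}(M,F)=\mathbb P(\bigwedge^2F^{n+1})$, $\ell=\langle v_0,v_1\rangle\mapsto F(v_0\wedge v_1)$, with image the Grassmann variety $\mathcal G_{n,1}$. A line spread of a projective space is a set of lines such that each point lies on exactly one of them; a line spread $\mathcal F$ is linear if $\mathcal F^{\wp_{n,1}}$ is the intersection of $\mathcal G_{n,1}$ with a subspace of $\mathrm{PG}(M,F)$; it is geometric if for any two distinct lines $\ell,m\in\mathcal F$ the lines of $\mathcal F$ contained in the solid $\ell\vee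 m$ form a line spread of $\ell\vee m$. *)

(* Defs.v *)
From HB Require Import structures.
From mathcomp Require Import all_boot all_order all_algebra.
Set Implicit Arguments. Unset Strict Implicit. Unset Printing Implicit Defensive.
Import GRing.Theory.
Local Open Scope ring_scope.

(* PG(n,F) = projective space of F^(n+1) = 'rV[F]_n.+1.
   A subspace of PG(n,F) is represented by a square matrix (its row space). *)

(* Index set of Pluecker coordinates of lines: pairs i < j. *)
Notation pidx n := {p : 'I_n.+1 * 'I_n.+1 | (p.1 < p.2)%N}.
(* Index set of Pluecker coordinates of planes: triples i < j < k. *)
Notation tidx n :=
  {t : 'I_n.+1 * 'I_n.+1 * 'I_n.+1 | (t.1.1 < t.1.2)%N && (t.1.2 < t.2)%N}.

(* Pluecker coordinates of u /\ v (a vector of bigwedge^2 F^(n+1)). *)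
Definition plk (F : fieldType) (n : nat) (u v : 'rV[F]_n.+1)
  : 'rV[F]_#|{: pidx n}| :=
  \row_k (let p : pidx n := enum_val k in
          u 0 (val p).1 * v 0 (val p).2 - u 0 (val p).2 * v 0 (val p).1).

(* Pluecker coordinate of u /\ v /\ w at index t = (a,b,c): 3x3 minor. *)
Definition minor3 (F : fieldType) (n : nat) (u v w : 'rV[F]_n.+1) (t : tidx n) : F :=
  let a := (val t).1.1 in let b := (val t).1.2 in let c := (val t).2 in
  u 0 a * (v 0 b * w 0 c - v 0 c * w 0 b)
  - u 0 b * (v 0 a * w 0 c - v 0 c * w 0 a)
  + u 0 c * (v 0 a * w 0 b - v 0 b * w 0 a).

Definition is_point (F : fieldType) (n : nat) (X : 'M[F]_n.+1) := \rank X = 1%N.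
Definition is_line (F : fieldType) (n : nat) (X : 'M[F]_n.+1) := \rank X = 2%N.
Definition is_plane (F : fieldType) (n : nat) (X : 'M[F]_n.+1) := \rank X = 3%N.
Definition is_hyperplane (F : fieldType) (n : nat) (X : 'M[F]_n.+1) := \rank X = n.

(* The linear complex of planes K_c determined by the hyperplane of
   P(bigwedge^3 F^(n+1)) with coordinate vector c (c <> 0):
   a plane P = <u,v,w> is in K_c iff sum_t c_t [u/\v/\w]_t = 0. *)
Definition in_complex (F : fieldType) (n : nat) (c : {ffun tidx n -> F})
    (P : 'M[F]_n.+1) : Prop :=
  is_plane P /\
  forall u v w : 'rV[F]_n.+1, (col_mx u (col_mx v w) == P)%MS ->
    \sum_t c t * minor3 u v w t = 0.

Definition singular_line (F : fieldType) (n : nat) (c : {ffun tidx n -> F})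
    (L : 'M[F]_n.+1) : Prop :=
  forall P : 'M[F]_n.+1, is_plane P -> (L <= P)%MS -> in_complex c P.

Definition is_polar (F : fieldType) (n : nat) (c : {ffun tidx n -> F})
    (L E : 'M[F]_n.+1) : Prop :=
  is_hyperplane E /\
  forall P : 'M[F]_n.+1, is_plane P -> (L <= P)%MS ->
    (in_complex c P <-> (P <= E)%MS).

Definition polar_spread (F : fieldType) (n : nat) (c : {ffun tidx n -> F})
    (H L : 'M[F]_n.+1) : Prop :=
  is_line L /\ ~ singular_line c L /\ is_polar c L H.

Definition line_spread_of (F : fieldType) (n : nat) (S : 'M[F]_n.+1 -> Prop)
    (X : 'M[F]_n.+1) : Prop :=
  (forall L, S L -> is_line L /\ (L <= X)%MS) /\
  (forall p : 'M[F]_n.+1, is_point p -> (p <= X)%MS ->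
     exists L, [/\ S L, (p <= L)%MS &
       forall L', S L' -> (p <= L')%MS -> (L' == L)%MS]).

Definition geometric (F : fieldType) (n : nat) (S : 'M[F]_n.+1 -> Prop) : Prop :=
  forall L1 L2, S L1 -> S L2 -> ~~ (L1 == L2)%MS ->
    line_spread_of (fun L => S L /\ (L <= L1 + L2)%MS) (L1 + L2)%MS.

(* M = (n^2+n-2)/2, so that PG(M,F) = P(bigwedge^2 F^(n+1)). *)
Definition Mdim (n : nat) : nat := ((n * n + n - 2) %/ 2)%N.

Definition quad_closed (F : fieldType) : Prop := forall a : F, exists b, b * b = a.
Definition finite_field (F : fieldType) : Prop := exists s : seq F, forall x, x \in s.

(* Main.v *)
Require Import Defs.
From HB Require Import structures.
From mathcomp Require Import all_boot all_order all_algebra.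
From mathcomp Require Import ring.
Set Implicit Arguments. Unset Strict Implicit. Unset Printing Implicit Defensive.
Import GRing.Theory.
Local Open Scope ring_scope.

Section Basics.
Variable F : fieldType.
Variable n : nat.
Variable c : {ffun tidx n -> F}.
Local Notation V := 'rV[F]_n.+1.

Definition fF (u v w : V) : F := \sum_t c t * minor3 u v w t.

Lemma fF_lin1 a (u u' v w : V) : fF (a *: u + u') v w = a * fF u v w + fF u' v w.
Proof.
rewrite /fF mulr_sumr -big_split /=; apply: eq_bigr => t _.
rewrite /minor3 !mxE; ring.
Qed.
Lemma fF_lin2 a (u v v' w : V) : fF u (a *: v + v') w = a * fF u v w + fF u v' w.
Proof.
rewrite /fF mulr_sumr -big_split /=; apply: eq_bigr => t _.
rewrite /minor3 !mxE; ring.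
Qed.
Lemma fF_lin3 a (u v w w' : V) : fF u v (a *: w + w') = a * fF u v w + fF u v w'.
Proof.
rewrite /fF mulr_sumr -big_split /=; apply: eq_bigr => t _.
rewrite /minor3 !mxE; ring.
Qed.
Lemma fF_uuw (u w : V) : fF u u w = 0.
Proof. rewrite /fF big1 // => t _; rewrite /minor3; ring. Qed.
Lemma fF_uvu (u v : V) : fF u v u = 0.
Proof. rewrite /fF big1 // => t _; rewrite /minor3; ring. Qed.
Lemma fF_uvv (u v : V) : fF u v v = 0.
Proof. rewrite /fF big1 // => t _; rewrite /minor3; ring. Qed.
Lemma fF_swap12 (u v w : V) : fF v u w = - fF u v w.
Proof. rewrite /fF -sumrN; apply: eq_bigr => t _; rewrite /minor3; ring. Qed.
Lemma fF_cyc (u v w : V) : fF v w u = fF u v w.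
Proof. rewrite /fF; apply: eq_bigr => t _; rewrite /minor3; ring. Qed.

Definition det3 (a1 a2 a3 b1 b2 b3 c1 c2 c3 : F) :=
  a1 * (b2 * c3 - b3 * c2) - a2 * (b1 * c3 - b3 * c1) + a3 * (b1 * c2 - b2 * c1).

Lemma fF_comb (u v w : V) a1 a2 a3 b1 b2 b3 c1 c2 c3 :
  fF (a1 *: u + a2 *: v + a3 *: w) (b1 *: u + b2 *: v + b3 *: w)
     (c1 *: u + c2 *: v + c3 *: w) = det3 a1 a2 a3 b1 b2 b3 c1 c2 c3 * fF u v w.
Proof.
rewrite /fF mulr_sumr; apply: eq_bigr => t _.
rewrite /minor3 /det3 !mxE; ring.
Qed.
End Basics.
From HB Require Import structures.
From mathcomp Require Import all_boot all_order all_algebra.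
From mathcomp Require Import ring.
Set Implicit Arguments. Unset Strict Implicit. Unset Printing Implicit Defensive.
Import GRing.Theory.
Local Open Scope ring_scope.

Section LA.
Variable F : fieldType.
Variable m : nat.
Local Notation V := 'rV[F]_m.

Lemma m11 (A : 'M[F]_1) (u : V) : A *m u = A 0 0 *: u.
Proof. by rewrite {1}[A]mx11_scalar mul_scalar_mx. Qed.

Lemma sub2 (x u v : V) : (x <= col_mx u v)%MS -> exists a b, x = a *: u + b *: v.
Proof.
case/submxP=> D ->; rewrite -[D]hsubmxK mul_row_col !m11.
by exists (lsubmx D 0 0), (rsubmx D 0 0).
Qed.

Lemma sub3 (x u v w : V) : (x <= col_mx u (col_mx v w))%MS ->
  exists a1 a2 a3, x = a1 *: u + a2 *: v + a3 *: w.
Proof.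
case/submxP=> D ->; rewrite -[D]hsubmxK mul_row_col -[rsubmx D]hsubmxK mul_row_col !m11.
by exists (lsubmx D 0 0), (lsubmx (rsubmx D) 0 0), (rsubmx (rsubmx D) 0 0); rewrite addrA.
Qed.

Lemma colSl m1 m2 (A : 'M[F]_(m1, m)) (B : 'M[F]_(m2, m)) : (A <= col_mx A B)%MS.
Proof. by rewrite -addsmxE addsmxSl. Qed.
Lemma colSr m1 m2 (A : 'M[F]_(m1, m)) (B : 'M[F]_(m2, m)) : (B <= col_mx A B)%MS.
Proof. by rewrite -addsmxE addsmxSr. Qed.

Lemma comb2_sub (u v : V) a b : ((a *: u + b *: v)%R <= col_mx u v)%MS.
Proof.
by apply: addmx_sub; apply: scalemx_sub; [apply: colSl | apply: colSr].
Qed.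

Lemma comb3_sub (u v w : V) a b d : ((a *: u + b *: v + d *: w)%R <= col_mx u (col_mx v w))%MS.
Proof.
apply: addmx_sub; first apply: addmx_sub; apply: scalemx_sub.
- exact: colSl.
- exact: (submx_trans (colSl _ _) (colSr _ _)).
- exact: (submx_trans (colSr _ _) (colSr _ _)).
Qed.

Lemma indep2 (u v : V) a b : \rank (col_mx u v) = 2%N -> a *: u + b *: v = 0 -> a = 0 /\ b = 0.
Proof.
move=> r2 e.
have fr : row_free (col_mx u v) by rewrite /row_free r2.
have : (row_mx a%:M b%:M) *m col_mx u v = 0 by rewrite mul_row_col !mul_scalar_mx.
move/eqP; rewrite mulmx_free_eq0 //.
move/eqP=> /rowP h; split.
  by have := h (lshift 1 0); rewrite row_mxEl !mxE.
by have := h (rshift 1 0); rewrite row_mxEr !mxE.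
Qed.

Lemma my_nzrow {p q} (A : 'M[F]_(p, q)) : A != 0 -> exists i, row i A != 0.
Proof.
move=> nzA; apply/existsP; apply: contraR nzA; rewrite negb_exists => /forallP h.
apply/eqP/row_matrixP => i; rewrite row0; apply/eqP; move: (h i); by rewrite negbK.
Qed.

Lemma dep2 (u v : V) : \rank (col_mx u v) != 2%N ->
  exists a b, ((a != 0) || (b != 0)) /\ a *: u + b *: v = 0.
Proof.
move=> r2.
have nzK : kermx (col_mx u v) != 0 by rewrite kermx_eq0 /row_free.
have [i nzr] := my_nzrow nzK.
have := row_sub i (kermx (col_mx u v)); rewrite sub_kermx.
set r := row i _ in nzr *.
rewrite -[r]hsubmxK mul_row_col !m11 => /eqP e.
exists (lsubmx r 0 0), (rsubmx r 0 0); split => //.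
apply: contraR nzr; rewrite negb_or !negbK => /andP[/eqP h1 /eqP h2].
apply/eqP; rewrite -[r]hsubmxK; apply/rowP=> j; rewrite !mxE.
by case: splitP => k _; rewrite (ord1 k) ?h1 ?h2.
Qed.

Lemma sub_rank {p q} (A : 'M[F]_(p, m)) (B : 'M[F]_(q, m)) :
  (A <= B)%MS -> (\rank B <= \rank A)%N -> (B <= A)%MS.
Proof.
move=> sAB le; rewrite -(mxrank_leqif_sup sAB).2 eqn_leq le andbT; exact: mxrankS.
Qed.

Lemma rank_add_row p (A : 'M[F]_(p, m)) (x : V) : ~~ (x <= A)%MS ->
  \rank (col_mx A x) = (\rank A).+1.
Proof.
move=> nxA.
have nz : x != 0 by apply: contraNneq nxA => ->; rewrite sub0mx.
have r1 : \rank x = 1%N by rewrite rank_rV nz.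
have cap0 : \rank (A :&: x)%MS = 0%N.
  apply/eqP; apply: contraNT nxA => ne0.
  have h : (x <= (A :&: x))%MS by apply: sub_rank; rewrite ?capmxSr // r1 lt0n.
  exact: (submx_trans h (capmxSl _ _)).
have := mxrank_sum_cap A x; by rewrite cap0 r1 -addsmxE addn1 addn0.
Qed.

End LA.
From HB Require Import structures.
From mathcomp Require Import all_boot all_order all_algebra.
From mathcomp Require Import ring.
Set Implicit Arguments. Unset Strict Implicit. Unset Printing Implicit Defensive.
Import GRing.Theory.
Local Open Scope ring_scope.

Lemma lin_sum (F : fieldType) k (g : 'rV[F]_k -> F) :
  (forall a x y, g (a *: x + y) = a * g x + g y) ->
  forall w, g w = \sum_j w 0 j * g (delta_mx 0 j).
Proof.
move=> gl w.
have g0 : g 0 = 0.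
  have := gl 1 0 0; rewrite scaler0 addr0 mul1r => h.
  by apply: (addrI (g 0)); rewrite addr0 -h.
rewrite {1}(row_sum_delta w).
elim/big_rec2: _ => [|j x y _ <-]; first by [].
exact: gl.
Qed.

Section Cx.
Variable F : fieldType.
Variable n : nat.
Variable c : {ffun tidx n -> F}.
Local Notation V := 'rV[F]_n.+1.
Local Notation f := (fF c).

Definition fz (u v : V) : 'cV[F]_n.+1 := \col_j f u v (delta_mx 0 j).

Lemma fF_fz (u v z : V) : f u v z = (z *m fz u v) 0 0.
Proof.
rewrite (@lin_sum _ _ (fun z => f u v z)); last by move=> a x y; rewrite fF_lin3.
by rewrite mxE; apply: eq_bigr => j _; rewrite mxE.
Qed.

Lemma fzP p (X : 'M[F]_(p, n.+1)) (u v : V) :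
  (forall z, (z <= X)%MS -> f u v z = 0) <-> X *m fz u v = 0.
Proof.
split=> [h | h z /submxP [D ->]].
  apply/matrixP=> i j; rewrite (ord1 j) [RHS]mxE.
  by have := h _ (row_sub i X); rewrite fF_fz -row_mul mxE.
by rewrite fF_fz -mulmxA h mulmx0 mxE.
Qed.

Lemma fF_add1 (u u' v w : V) : f (u + u') v w = f u v w + f u' v w.
Proof. by rewrite -{1}[u]scale1r fF_lin1 mul1r. Qed.
Lemma fF_add2 (u v v' w : V) : f u (v + v') w = f u v w + f u v' w.
Proof. by rewrite -{1}[v]scale1r fF_lin2 mul1r. Qed.
Lemma fF_add3 (u v w w' : V) : f u v (w + w') = f u v w + f u v w'.
Proof. by rewrite -{1}[w]scale1r fF_lin3 mul1r. Qed.
Lemma fF_0_1 (v w : V) : f 0 v w = 0.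
Proof. by rewrite /fF big1 // => t _; rewrite /minor3 !mxE; ring. Qed.
Lemma fF_0_2 (u w : V) : f u 0 w = 0.
Proof. by rewrite /fF big1 // => t _; rewrite /minor3 !mxE; ring. Qed.
Lemma fF_0_3 (u v : V) : f u v 0 = 0.
Proof. by rewrite /fF big1 // => t _; rewrite /minor3 !mxE; ring. Qed.
Lemma fF_sc1 a (u v w : V) : f (a *: u) v w = a * f u v w.
Proof. by rewrite -[a *: u]addr0 fF_lin1 fF_0_1 addr0. Qed.
Lemma fF_sc2 a (u v w : V) : f u (a *: v) w = a * f u v w.
Proof. by rewrite -[a *: v]addr0 fF_lin2 fF_0_2 addr0. Qed.
Lemma fF_sc3 a (u v w : V) : f u v (a *: w) = a * f u v w.
Proof. by rewrite -[a *: w]addr0 fF_lin3 fF_0_3 addr0. Qed.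
Definition fFE := (fF_add1, fF_add2, fF_add3, fF_sc1, fF_sc2, fF_sc3).

Lemma f_inline (u v : V) a b : f u v (a *: u + b *: v) = 0.
Proof. by rewrite !fFE fF_uvu fF_uvv !mulr0 addr0. Qed.

Lemma colA_sub (u v w : V) : (col_mx u (col_mx v w) == col_mx (col_mx u v) w)%MS.
Proof.
apply/andP; split; rewrite !col_mx_sub.
  apply/and3P; split.
  - exact: (submx_trans (colSl u v) (colSl _ w)).
  - exact: (submx_trans (colSr u v) (colSl _ w)).
  - exact: colSr.
rewrite -andbA; apply/and3P; split.
- exact: colSl.
- exact: (submx_trans (colSl v w) (colSr u _)).
- exact: (submx_trans (colSr v w) (colSr u _)).
Qed.

Lemma rank_triple (u v w : V) : \rank (col_mx u v) = 2%N -> ~~ (w <= col_mx u v)%MS ->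
  \rank (col_mx u (col_mx v w)) = 3%N.
Proof.
move=> r2 nw; rewrite (eqmx_rank (colA_sub u v w)) rank_add_row // r2 //.
Qed.

Lemma plane_of_line (u v : V) (P : 'M[F]_n.+1) : \rank (col_mx u v) = 2%N -> is_plane P ->
  (col_mx u v <= P)%MS -> exists w : V, (col_mx u (col_mx v w) == P)%MS.
Proof.
move=> r2 pP sLP.
have [i ni] : exists i, ~~ (row i P <= col_mx u v)%MS.
  apply/existsP; rewrite -negb_forall; apply/negP => /forallP h.
  have : (P <= col_mx u v)%MS by apply/row_subP => i; exact: h i.
  by move/mxrankS; rewrite pP r2.
exists (row i P); apply/andP; split.
  move: sLP; rewrite !col_mx_sub => /andP [-> ->]; by rewrite row_sub.
by apply: sub_rank; rewrite ?pP ?rank_triple //;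
  move: sLP; rewrite !col_mx_sub => /andP [-> ->]; rewrite row_sub.
Qed.

Lemma in_complex_iff (u v w : V) (P : 'M[F]_n.+1) : (col_mx u (col_mx v w) == P)%MS ->
  (in_complex c P <-> is_plane P /\ f u v w = 0).
Proof.
move=> eT; split=> [[pP h] | [pP h]]; first by split => //; exact: h.
split => // u' v' w' /andP [sT _].
have sT' := submx_trans sT (proj2 (andP eT)).
move: (sT'); rewrite !col_mx_sub => /and3P [su sv sw].
have [a1 [a2 [a3 ->]]] := sub3 su.
have [b1 [b2 [b3 ->]]] := sub3 sv.
have [c1 [c2 [c3 ->]]] := sub3 sw.
by change (f (a1 *: u + a2 *: v + a3 *: w) (b1 *: u + b2 *: v + b3 *: w)
    (c1 *: u + c2 *: v + c3 *: w) = 0); rewrite fF_comb h mulr0.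
Qed.

End Cx.
From HB Require Import structures.
From mathcomp Require Import all_boot all_order all_algebra.
From mathcomp Require Import ring zify.
Set Implicit Arguments. Unset Strict Implicit. Unset Printing Implicit Defensive.
Import GRing.Theory.
Local Open Scope ring_scope.

Section Polar.
Variable F : fieldType.
Variable n : nat.
Variable c : {ffun tidx n -> F}.
Local Notation V := 'rV[F]_n.+1.
Local Notation f := (fF c).
Variable H : 'M[F]_n.+1.
Hypothesis hn : (3 <= n)%N.
Hypothesis nosing : forall L : 'M[F]_n.+1, is_line L -> ~ singular_line c L.
Hypothesis rkH : \rank H = n.

Lemma eq_gen m (A : 'M[F]_(m, n.+1)) : (A == (genmx (A)))%MS.
Proof. apply/eqmxP; exact: eqmx_sym (genmxE _). Qed.

Lemma colL_triple (u v w : V) : (col_mx u v <= col_mx u (col_mx v w))%MS.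
Proof.
rewrite col_mx_sub colSl /=; exact: (submx_trans (colSl v w) (colSr u _)).
Qed.

Lemma fz0_false (x y : V) : \rank (col_mx x y) = 2%N -> fz c x y = 0 -> False.
Proof.
move=> r2 z0; apply: (@nosing (genmx (col_mx x y))); first by rewrite /is_line genmxE.
move=> P pP; rewrite genmxE => sLP; have [w eT] := plane_of_line r2 pP sLP.
apply/(in_complex_iff c eT); split => //; by rewrite fF_fz z0 mulmx0 mxE.
Qed.

Lemma outside_H (x : V) (g : 'cV[F]_n.+1) : ~~ (x <= H)%MS ->
  H *m g = 0 -> x *m g = 0 -> g = 0.
Proof.
move=> nx hg xg.
have : row_full (col_mx H x) by rewrite /row_full rank_add_row // rkH.
case/row_fullP=> B hB.
by rewrite -[g]mul1mx -hB -mulmxA mul_col_mx hg xg col_mx0 mulmx0.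
Qed.

Lemma in_H_of_zero (u v : V) : \rank (col_mx u v) = 2%N -> H *m fz c u v = 0 ->
  forall x, f u v x = 0 -> (x <= H)%MS.
Proof.
move=> r2 hg x fx; apply: contraT => nx; exfalso.
apply: (fz0_false r2); apply: (outside_H nx hg).
by apply/rowP=> j; rewrite (ord1 j) -fF_fz fx mxE.
Qed.

Lemma PS_iff (u v : V) : \rank (col_mx u v) = 2%N ->
  (polar_spread c H (genmx (col_mx u v)) <-> H *m fz c u v = 0).
Proof.
move=> r2; split.
  case=> _ [_ [_ pol]].
  have [x [nx fx]] : exists x : V, ~~ (x <= col_mx u v)%MS /\ f u v x = 0.
    set K := kermx (fz c u v).
    have rK : (n <= \rank K)%N.
      rewrite mxrank_ker; have := rank_leq_col (fz c u v); lia.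
    have [i ni] : exists i, ~~ (row i K <= col_mx u v)%MS.
      apply/existsP; rewrite -negb_forall; apply/negP => /forallP h.
      have : (K <= col_mx u v)%MS by apply/row_subP => i; exact: h i.
      move/mxrankS; rewrite r2 => h2; have := leq_trans rK h2.
      by move=> h3; have := leq_trans hn h3.
    exists (row i K); split => //.
    have := row_sub i K; rewrite sub_kermx => /eqP h.
    by rewrite fF_fz h mxE.
  have pP : is_plane (genmx (col_mx u (col_mx v x))) by rewrite /is_plane genmxE rank_triple.
  have sLP : ((genmx (col_mx u v)) <= (genmx (col_mx u (col_mx v x))))%MS by rewrite !genmxE colL_triple.
  have sPH := (proj1 (pol _ pP sLP)) (proj2 (in_complex_iff c (eq_gen _)) (conj pP fx)).
  move: (sPH); rewrite genmxE !col_mx_sub => /and3P [uH vH _].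
  apply/fzP => z sz.
  case: (boolP (z <= col_mx u v)%MS) => [/sub2 [a [b ->]] | nz]; first exact: f_inline.
  have pP' : is_plane (genmx (col_mx u (col_mx v z))) by rewrite /is_plane genmxE rank_triple.
  have sLP' : ((genmx (col_mx u v)) <= (genmx (col_mx u (col_mx v z))))%MS by rewrite !genmxE colL_triple.
  have sPH' : ((genmx (col_mx u (col_mx v z))) <= H)%MS by rewrite genmxE !col_mx_sub uH vH sz.
  by have [] := (proj1 (in_complex_iff c (eq_gen _))) ((proj2 (pol _ pP' sLP')) sPH').
move=> hg.
split; first by rewrite /is_line genmxE.
split; first by apply: nosing; rewrite /is_line genmxE.
split; first exact: rkH.
move=> P pP; rewrite genmxE => sLP; have [w eT] := plane_of_line r2 pP sLP.
rewrite (in_complex_iff c eT); split.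
  case=> _ fw; apply: submx_trans (proj2 (andP eT)) _.
  rewrite !col_mx_sub !(in_H_of_zero r2 hg) //; [exact: fF_uvv | exact: fF_uvu].
move=> sPH; split => //.
have sw : (w <= P)%MS.
  apply: submx_trans (proj1 (andP eT)).
  exact: (submx_trans (colSr v w) (colSr u _)).
by apply/((fzP c H u v).2 hg); apply: submx_trans sPH.
Qed.

End Polar.
From mathcomp Require Import all_boot all_order all_algebra zify.

Lemma sum_lt k : (\sum_(i < k) \sum_(j < k) ((i < j)%N : nat) = 'C(k,2))%N.
Proof.
elim: k => [|k IH]; first by rewrite big_ord0.
rewrite big_ord_recr /=.
under eq_bigr do rewrite big_ord_recr /= ltn_ord.
rewrite big_split /= IH sum1_card card_ord big1 => [|j _]; last first.
  by rewrite ltnNge -ltnS ltn_ord.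
by rewrite binS bin1 addn0 addnC.
Qed.

Lemma card_pairs k : #|[pred p : 'I_k * 'I_k | (p.1 < p.2)%N]| = 'C(k, 2).
Proof.
rewrite -sum1_card big_mkcond /= -sum_lt pair_big /=.
by apply: eq_bigr => p _; rewrite inE; case: ifP.
Qed.

Lemma card_pidx n : #|{: pidx n}| = 'C(n.+1, 2).
Proof. by rewrite card_sig card_pairs. Qed.

Lemma Mdim_eq n : (3 <= n)%N -> ((Mdim n - n).+1 = 'C(n.+1, 2) - n)%N.
Proof.
move=> hn; rewrite /Mdim.
have e : ('C(n.+1, 2) * 2 = n.+1 * n)%N by rewrite (bin_ffact n.+1 2) ffactnS ffactn1.
have -> : (n * n + n - 2 = ('C(n.+1, 2) - 1) * 2)%N by rewrite mulnBl e; lia.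
rewrite mulnK //; have : (n.+1 <= 'C(n.+1,2))%N by nia.
lia.
Qed.
From HB Require Import structures.
From mathcomp Require Import all_boot all_order all_algebra.
From mathcomp Require Import ring zify.
Set Implicit Arguments. Unset Strict Implicit. Unset Printing Implicit Defensive.
Import GRing.Theory.
Local Open Scope ring_scope.

Section Part1.
Variable F : fieldType.
Variable n : nat.
Variable c : {ffun tidx n -> F}.
Local Notation V := 'rV[F]_n.+1.
Local Notation f := (fF c).
Local Notation N := #|{: pidx n}|.

Lemma tab (t : tidx n) : ((val t).1.1 < (val t).1.2)%N.
Proof. by case/andP: (valP t). Qed.
Lemma tbc (t : tidx n) : ((val t).1.2 < (val t).2)%N.
Proof. by case/andP: (valP t). Qed.
Lemma tac (t : tidx n) : ((val t).1.1 < (val t).2)%N.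
Proof. exact: ltn_trans (tab t) (tbc t). Qed.

Definition pab (t : tidx n) : pidx n :=
  exist (fun p : 'I_n.+1 * 'I_n.+1 => (p.1 < p.2)%N) ((val t).1.1, (val t).1.2) (tab t).
Definition pbc (t : tidx n) : pidx n :=
  exist (fun p : 'I_n.+1 * 'I_n.+1 => (p.1 < p.2)%N) ((val t).1.2, (val t).2) (tbc t).
Definition pac (t : tidx n) : pidx n :=
  exist (fun p : 'I_n.+1 * 'I_n.+1 => (p.1 < p.2)%N) ((val t).1.1, (val t).2) (tac t).

Definition pc (p : 'rV[F]_N) (q : pidx n) : F := p 0 (enum_rank q).

Definition Bil (p : 'rV[F]_N) (z : V) : F :=
  \sum_t c t * (pc p (pab t) * z 0 (val t).2 - pc p (pac t) * z 0 (val t).1.2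
                + pc p (pbc t) * z 0 (val t).1.1).

Lemma plkE (u v : V) q : pc (plk u v) q =
  u 0 (val q).1 * v 0 (val q).2 - u 0 (val q).2 * v 0 (val q).1.
Proof. by rewrite /pc /plk mxE enum_rankK. Qed.

Lemma fF_Bil (u v z : V) : f u v z = Bil (plk u v) z.
Proof.
rewrite /fF /Bil; apply: eq_bigr => t _; rewrite !plkE /= /minor3; ring.
Qed.

Lemma Bil_lin1 a p p' z : Bil (a *: p + p') z = a * Bil p z + Bil p' z.
Proof.
rewrite /Bil mulr_sumr -big_split /=; apply: eq_bigr => t _; rewrite /pc !mxE; ring.
Qed.
Lemma Bil_lin2 a p z z' : Bil p (a *: z + z') = a * Bil p z + Bil p z'.
Proof.
rewrite /Bil mulr_sumr -big_split /=; apply: eq_bigr => t _; rewrite !mxE; ring.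
Qed.

Definition Psi : 'M[F]_(N, n.+1) := \matrix_(k, j) Bil (delta_mx 0 k) (delta_mx 0 j).

Lemma Bil_Psi p z : Bil p z = (p *m (Psi *m z^T)) 0 0.
Proof.
rewrite (@lin_sum _ _ (fun p => Bil p z)); last by move=> *; rewrite Bil_lin1.
rewrite mxE; apply: eq_bigr => k _; congr (_ * _).
rewrite (@lin_sum _ _ (fun z => Bil (delta_mx 0 k) z)); last by move=> *; rewrite Bil_lin2.
rewrite mxE; apply: eq_bigr => j _; rewrite !mxE mulrC //.
Qed.

Lemma entryL p (X : 'M[F]_(p, n.+1)) q i : (q *m (Psi *m X^T)) 0 i = Bil q (row i X).
Proof.
rewrite Bil_Psi !mxE; apply: eq_bigr => k _; rewrite !mxE; congr (_ * _).
by apply: eq_bigr => j _; rewrite !mxE.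
Qed.

Lemma entryR p (X : 'M[F]_(p, n.+1)) (u v : V) i : (X *m fz c u v) i 0 = f u v (row i X).
Proof. by rewrite fF_fz -row_mul [RHS]mxE. Qed.

Lemma plkPsi (u v : V) p (X : 'M[F]_(p, n.+1)) :
  (plk u v *m (Psi *m X^T) == 0) = (X *m fz c u v == 0).
Proof.
apply/eqP/eqP => h; apply/matrixP => i j.
  rewrite (ord1 j) [RHS]mxE entryR fF_Bil -entryL h mxE //.
rewrite (ord1 i) [RHS]mxE entryL -fF_Bil -entryR h mxE //.
Qed.

End Part1.

Section Part1b.
Variable F : fieldType.
Variable n : nat.
Variable c : {ffun tidx n -> F}.
Local Notation V := 'rV[F]_n.+1.
Local Notation f := (fF c).
Local Notation N := #|{: pidx n}|.
Variable H : 'M[F]_n.+1.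
Hypothesis hn : (3 <= n)%N.
Hypothesis nosing : forall L : 'M[F]_n.+1, is_line L -> ~ singular_line c L.
Hypothesis rkH : \rank H = n.

Lemma rank_PsiH : \rank (Psi c *m H^T) = n.
Proof.
rewrite -mxrank_tr trmx_mul trmxK.
have := mxrank_mul_ker H (Psi c)^T.
set K0 := (H :&: kermx (Psi c)^T)%MS.
suff -> : \rank K0 = 0%N by rewrite addn0 rkH.
apply/eqP; rewrite mxrank_eq0; apply: contraT => nz.
have [i nzr] := my_nzrow nz.
set z := row i K0 in nzr.
have zK : (z <= kermx (Psi c)^T)%MS by apply: submx_trans (row_sub i K0) (capmxSr _ _).
move: zK; rewrite sub_kermx => /eqP zP.
have f0 : forall x y : V, f x y z = 0.
  move=> x y; rewrite fF_Bil Bil_Psi.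
  have -> : Psi c *m z^T = 0 by rewrite -[Psi c]trmxK -trmx_mul zP trmx0.
  by rewrite mulmx0 mxE.
have [j nj] : exists j : 'I_n.+1, ~~ ((delta_mx 0 j : V) <= z)%MS.
  apply/existsP; rewrite -negb_forall; apply/negP => /forallP h.
  have : (1%:M <= z)%MS by apply/row_subP => j; rewrite row1; exact: h j.
  move/mxrankS; rewrite mxrank1 rank_rV nzr => h1.
  by have := leq_trans hn h1.
have r2 : \rank (col_mx z (delta_mx 0 j : V)) = 2%N by rewrite rank_add_row // rank_rV nzr.
exfalso; apply: (fz0_false nosing r2).
apply/matrixP => k l; rewrite (ord1 l) !mxE.
by rewrite fF_cyc fF_cyc f0.
Qed.

Lemma part1 : exists R : 'M[F]_N,
     \rank R = (Mdim n - n).+1 /\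
     forall u v : V, \rank (col_mx u v) = 2%N ->
       (polar_spread c H (genmx (col_mx u v)) <-> (plk u v <= R)%MS).
Proof.
exists (kermx (Psi c *m H^T)); split.
  by rewrite mxrank_ker rank_PsiH card_pidx Mdim_eq.
move=> u v r2; rewrite (PS_iff hn nosing rkH r2) sub_kermx plkPsi.
by split => [->|/eqP].
Qed.

End Part1b.
From HB Require Import structures.
From mathcomp Require Import all_boot all_order all_algebra.
From mathcomp Require Import ring zify.
Set Implicit Arguments. Unset Strict Implicit. Unset Printing Implicit Defensive.
Import GRing.Theory.
Local Open Scope ring_scope.

Section Fin.
Variable F : fieldType.
Variable s0 : seq F.
Hypothesis us0 : uniq s0.
Hypothesis alls : forall x, x \in s0.

Lemma count_fiber (g : F -> F) (hg : forall x y, g x = g y -> y = x \/ y = -x) v :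
  (count (fun x => g x == v) s0 <= 2)%N.
Proof.
case: (boolP (has (fun x => g x == v) s0)) => [/hasP [x0 _ /eqP gx0] | ]; last first.
  by rewrite has_count lt0n negbK => /eqP ->.
apply: leq_trans (sub_count (a2 := predU (pred1 x0) (pred1 (-x0))) _ _) _.
  move=> y /eqP gy /=; case: (hg x0 y); rewrite ?gy ?gx0 // => ->; by rewrite eqxx ?orbT.
have := count_predUI (pred1 x0) (pred1 (-x0)) s0.
rewrite !count_uniq_mem // !alls => e; lia.
Qed.

Lemma count_fiber0 (g : F -> F) (hg0 : forall x, g x = g 0 -> x = 0) :
  (count (fun x => g x == g 0%R) s0 <= 1)%N.
Proof.
apply: leq_trans (sub_count (a2 := pred1 (0 : F)) _ _) _.
  by move=> y /eqP /hg0 /= ->.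
by rewrite count_uniq_mem // alls.
Qed.

Lemma image_big (g : F -> F) (hg : forall x y, g x = g y -> y = x \/ y = -x)
   (hg0 : forall x, g x = g 0 -> x = 0) :
  (size s0 < 2 * size (undup (map g s0)))%N.
Proof.
set I := undup (map g s0).
have uI : uniq I := undup_uniq _.
have gI : forall x, g x \in I by move=> x; rewrite mem_undup map_f.
have e : size s0 = (\sum_(v <- I) count (fun x => g x == v) s0)%N.
  rewrite -(count_predT s0) -sum1_count.
  transitivity (\sum_(x <- s0) \sum_(v <- I) (g x == v : nat))%N.
    rewrite big_mkcond /=; apply: eq_bigr => x _.
    transitivity (count_mem (g x) I : nat); first by rewrite count_uniq_mem ?gI.
    by rewrite -sum1_count big_mkcond /=; apply: eq_bigr => v _; rewrite eq_sym; case: eqP.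
  rewrite exchange_big /=; apply: eq_bigr => v _.
  by rewrite -sum1_count [RHS]big_mkcond /=; apply: eq_bigr => x _; case: eqP.
have le : (size s0 <= \sum_(v <- I) (2 - (v == g 0%R)))%N.
  rewrite e; apply: leq_sum => v _.
  case: eqP => [->|_]; last by rewrite subn0 count_fiber.
  by rewrite count_fiber0.
have e2 : (\sum_(v <- I) (2 - (v == g 0%R)) + \sum_(v <- I) (v == g 0%R : nat) = 2 * size I)%N.
  rewrite -big_split /=.
  rewrite (eq_bigr (fun _ => 2%N)) => [|v _]; last by case: eqP.
  by rewrite big_const_seq count_predT iter_addn_0.
have e3 : (\sum_(v <- I) (v == g 0%R : nat) = 1)%N.
  transitivity (count_mem (g 0%R) I : nat); last by rewrite count_uniq_mem ?gI.
  by rewrite -sum1_count [RHS]big_mkcond /=; apply: eq_bigr => v _; case: eqP.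
lia.
Qed.

Lemma sum2sq (a b d : F) : 2 != 0 :> F -> a != 0 -> b != 0 ->
  exists X Y, a * X * X + b * Y * Y = d.
Proof.
move=> two a0 b0.
have sq : forall (k : F) x y, k != 0 -> k * x * x = k * y * y -> y = x \/ y = -x.
  move=> k x y k0 /eqP; rewrite -subr_eq0 -!mulrA -mulrBr mulf_eq0 (negbTE k0) /=.
  have -> : x * x - y * y = (x - y) * (x + y) by ring.
  rewrite mulf_eq0 => /orP [|]; rewrite ?subr_eq0 ?addr_eq0 => /eqP ->; by [left | right; rewrite opprK].
set gA := fun X : F => a * X * X.
set gB := fun Y : F => d - b * Y * Y.
have hA : forall x y, gA x = gA y -> y = x \/ y = -x by move=> x y; exact: sq.
have hB : forall x y, gB x = gB y -> y = x \/ y = -x.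
  move=> x y e; apply: (sq b) => //; apply: oppr_inj; exact: (addrI d).
have hA0 : forall x, gA x = gA 0 -> x = 0.
  move=> x; rewrite /gA !mulr0 => /eqP; rewrite -mulrA mulf_eq0 (negbTE a0) mulf_eq0 orbb.
  by move/eqP.
have hB0 : forall x, gB x = gB 0 -> x = 0.
  move=> x; rewrite /gB !mulr0 subr0 => /eqP; rewrite -subr_eq0 addrC addKr oppr_eq0.
  by rewrite -mulrA mulf_eq0 (negbTE b0) mulf_eq0 orbb => /eqP.
have sA := image_big hA hA0.
have sB := image_big hB hB0.
set SA : seq F := undup (map gA s0) in sA.
set SB : seq F := undup (map gB s0) in sB.
have : has (mem SA) SB.
  apply: contraT => nh.
  have u : uniq (SA ++ SB) by rewrite cat_uniq !undup_uniq nh.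
  have := uniq_leq_size u (fun x _ => alls x).
  rewrite size_cat => h; have {}h : (size SA + size SB <= size s0)%N := h; have {}sA : (size s0 < 2 * size SA)%N := sA; have {}sB : (size s0 < 2 * size SB)%N := sB; suff : False by []; lia.
move/hasP => [v]; rewrite /= !mem_undup => /mapP [y _ ->] /mapP [x _ e].
exists x, y; rewrite /gA /gB in e; first [rewrite -e; ring | rewrite e; ring].
Qed.

Lemma frob_onto (g : F -> F) : injective g -> forall y, exists x, g x = y.
Proof.
move=> ig y.
have u : uniq (map g s0) by rewrite map_inj_uniq.
have := uniq_min_size u (fun x _ => alls x).
rewrite size_map leqnn => /(_ isT) [_ /(_ y)]; rewrite alls => /mapP [x _ ->].
by exists x.
Qed.

End Fin.
From HB Require Import structures.
From mathcomp Require Import all_boot all_order all_algebra.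
From mathcomp Require Import ring zify.
Set Implicit Arguments. Unset Strict Implicit. Unset Printing Implicit Defensive.
Import GRing.Theory.
Local Open Scope ring_scope.

Section Tern.
Variable F : fieldType.

Definition q3 (A B C D E G u s t : F) :=
  A*u*u + B*u*s + C*u*t + D*s*s + E*s*t + G*t*t.

Lemma fin_seq : finite_field F -> exists s0 : seq F, uniq s0 /\ forall x, x \in s0.
Proof.
case=> s hs; exists (undup s); split; first exact: undup_uniq.
by move=> x; rewrite mem_undup.
Qed.

Lemma sqrt_char2 : (2 : F) = 0 -> quad_closed F \/ finite_field F ->
  forall a : F, exists b, b * b = a.
Proof.
move=> two [qc | /fin_seq [s0 [us al]]]; first exact: qc.
have inj : injective (fun x : F => x * x).
  move=> x y e.
  have : (x - y) * (x - y) = 0.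
    transitivity ((x*x - y*y) + 2 * (y*y - x*y)); first ring.
    by rewrite e subrr two mul0r addr0.
  by move/eqP; rewrite mulf_eq0 orbb subr_eq0 => /eqP.
move=> a; have [b hb] := frob_onto us al inj a; by exists b.
Qed.

Lemma ternary : quad_closed F \/ finite_field F -> forall A B C D E G : F,
  exists u s t : F, ~~ [&& u == 0, s == 0 & t == 0] /\ q3 A B C D E G u s t = 0.
Proof.
move=> hF A B C D E G.
have [two|two] := eqVneq (2 : F) 0.
  have sq := sqrt_char2 two hF.
  case: (boolP ((B == 0) && (C == 0))) => [/andP [/eqP B0 /eqP C0] | nBC].
    have [A0|A0] := eqVneq A 0.
      exists 1, 0, 0; split; first by rewrite oner_eq0.
      by rewrite /q3 A0; ring.
    have [l hl] := sq (D / A).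
    exists l, 1, 0; split; first by rewrite oner_eq0 andbF.
    have -> : q3 A B C D E G l 1 0 = A * (l * l) + D by rewrite /q3 B0; ring.
    rewrite hl mulrC divfK //.
    have -> : D + D = 2 * D by ring.
    by rewrite two mul0r.
  set Qr := q3 A B C D E G 0 C B.
  have [Q0|Q0] := eqVneq Qr 0.
    exists 0, C, B; split => //.
    by rewrite eqxx /= andbC.
  have [l hl] := sq (A / Qr).
  exists 1, (l * C), (l * B); split; first by rewrite oner_eq0.
  have -> : q3 A B C D E G 1 (l * C) (l * B) = A + 2 * (l * B * C) + (l * l) * Qr.
    by rewrite /Qr /q3; ring.
  rewrite hl divfK // two mul0r addr0.
  have -> : A + A = 2 * A by ring.
  by rewrite two mul0r.
have four : (4 : F) != 0.
  have -> : (4 : F) = 2 * 2 by ring.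
  by rewrite mulf_neq0.
case: hF => [qc | /fin_seq [s0 [us al]]].
  have [A0|A0] := eqVneq A 0.
    exists 1, 0, 0; split; first by rewrite oner_eq0.
    by rewrite /q3 A0; ring.
  have [r hr] := qc (B * B - 4 * A * D).
  exists ((r - B) / (2 * A)), 1, 0; split; first by rewrite oner_eq0 andbF.
  have -> : q3 A B C D E G ((r - B) / (2 * A)) 1 0 = (r * r - (B * B - 4 * A * D)) / (4 * A).
    by rewrite /q3; field; rewrite A0 four two.
  by rewrite hr subrr mul0r.
have [A0|A0] := eqVneq A 0.
  exists 1, 0, 0; split; first by rewrite oner_eq0.
  by rewrite /q3 A0; ring.
set D' := D - B * B / (4 * A).
set E' := E - B * C / (2 * A).
set G' := G - C * C / (4 * A).
have [D0|D0] := eqVneq D' 0.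
  exists (- B / (2 * A)), 1, 0; split; first by rewrite oner_eq0 andbF.
  transitivity D'; last exact: D0.
  by rewrite /D' /q3; field; rewrite A0 four two.
set G'' := G' - E' * E' / (4 * D').
have [X [Y hXY]] := sum2sq us al (- G'') two A0 D0.
set s := Y - E' / (2 * D').
exists (X - (B * s + C) / (2 * A)), s, 1; split; first by rewrite oner_eq0 !andbF.
have -> : q3 A B C D E G (X - (B * s + C) / (2 * A)) s 1 = A * X * X + D' * Y * Y + G''.
  have e4 : D * (4 * A) - B * B = D' * (4 * A).
    by rewrite /D'; field; rewrite A0 four.
  rewrite /q3 /G'' /G' /s /E' /D'; field.
  by rewrite A0 four two e4 mulf_neq0 // mulf_neq0.
by rewrite hXY addNr.
Qed.
End Tern.
From HB Require Import structures.
From mathcomp Require Import all_boot all_order all_algebra.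
From mathcomp Require Import ring zify.
Set Implicit Arguments. Unset Strict Implicit. Unset Printing Implicit Defensive.
Import GRing.Theory.
Local Open Scope ring_scope.

Section Exist.
Variable F : fieldType.
Variable n : nat.
Variable c : {ffun tidx n -> F}.
Local Notation V := 'rV[F]_n.+1.
Local Notation f := (fF c).
Variable H : 'M[F]_n.+1.
Hypothesis hn : (3 <= n)%N.
Hypothesis nosing : forall L : 'M[F]_n.+1, is_line L -> ~ singular_line c L.
Hypothesis rkH : \rank H = n.

Lemma lin2E (u v w : V) : f u v w = \sum_j v 0 j * f u (delta_mx 0 j) w.
Proof. by rewrite (@lin_sum _ _ (fun v => f u v w)) // => *; rewrite fF_lin2. Qed.
Lemma lin3E (u v w : V) : f u v w = \sum_j w 0 j * f u v (delta_mx 0 j).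
Proof. by rewrite (@lin_sum _ _ (fun w => f u v w)) // => *; rewrite fF_lin3. Qed.

Lemma exists_line (p : V) : p != 0 -> (p <= H)%MS ->
  exists v : V, \rank (col_mx p v) = 2%N /\ H *m fz c p v = 0.
Proof.
move=> p0 pH.
set M : 'M[F]_n.+1 := \matrix_(j, i) f p (delta_mx 0 i) (delta_mx 0 j).
have HM : forall k i, (H *m M) k i = f p (delta_mx 0 i) (row k H).
  move=> k i; rewrite mxE (lin3E _ _ (row k H)); apply: eq_bigr => j _; by rewrite !mxE.
set Q := (H *m M)^T.
have tQ : forall a b, Q a b = (H *m M) b a by move=> a b; rewrite /Q mxE.
have vQ : forall (v : V) k, (v *m Q) 0 k = f p v (row k H).
  move=> v k; rewrite mxE (lin2E _ v); apply: eq_bigr => i _; by rewrite tQ HM.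
have pM : p *m M = 0.
  apply/rowP => i; rewrite !mxE -[RHS](fF_uvu c p (delta_mx 0 i)) (lin3E _ _ p).
  by apply: eq_bigr => j _; rewrite !mxE.
have rQ : (\rank Q <= n.-1)%N.
  rewrite mxrank_tr; have := mxrank_mul_ker H M; rewrite rkH.
  have : (1 <= \rank (H :&: kermx M)%MS)%N.
    have : (p <= H :&: kermx M)%MS by rewrite sub_capmx pH sub_kermx pM eqxx.
    by move/mxrankS; rewrite rank_rV p0.
  lia.
set K := kermx Q.
have rK : (2 <= \rank K)%N by rewrite mxrank_ker; lia.
have [i ni] : exists i, ~~ (row i K <= p)%MS.
  apply/existsP; rewrite -negb_forall; apply/negP => /forallP h.
  have : (K <= p)%MS by apply/row_subP => i; exact: h i.
  by move/mxrankS; rewrite rank_rV p0 => h1; have := leq_trans rK h1.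
exists (row i K); split; first by rewrite rank_add_row // rank_rV p0.
apply/matrixP => k l; rewrite (ord1 l) [RHS]mxE entryR -vQ.
by have := row_sub i K; rewrite sub_kermx => /eqP ->; rewrite mxE.
Qed.

End Exist.
From HB Require Import structures.
From mathcomp Require Import all_boot all_order all_algebra.
From mathcomp Require Import ring zify.
Set Implicit Arguments. Unset Strict Implicit. Unset Printing Implicit Defensive.
Import GRing.Theory.
Local Open Scope ring_scope.

Section Geo.
Variable F : fieldType.
Variable n : nat.
Variable c : {ffun tidx n -> F}.
Local Notation V := 'rV[F]_n.+1.
Local Notation f := (fF c).
Variable H : 'M[F]_n.+1.
Hypothesis hn : (3 <= n)%N.
Hypothesis nosing : forall L : 'M[F]_n.+1, is_line L -> ~ singular_line c L.
Hypothesis rkH : \rank H = n.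

Local Notation PS := (polar_spread c H).

Lemma PS_eq (L L' : 'M[F]_n.+1) : (L == L')%MS -> PS L -> PS L'.
Proof.
move/eqmxP => e [l [ns [hy pol]]]; split; first by rewrite /is_line -e.
split.
  move=> sL'; apply: ns => P pP sLP; apply: sL' => //; by rewrite -e.
split => // P pP sL'P; apply: pol => //; by rewrite e.
Qed.

Lemma PS_vec (L : 'M[F]_n.+1) (x y : V) : PS L -> (x <= L)%MS -> (y <= L)%MS ->
  \rank (col_mx x y) = 2%N -> H *m fz c x y = 0.
Proof.
move=> pl xL yL r2; have rL : \rank L = 2%N by case: pl.
apply/(PS_iff hn nosing rkH r2); apply: PS_eq pl.
have sL : (col_mx x y <= L)%MS by rewrite col_mx_sub xL yL.
apply/andP; split; rewrite genmxE //.
by apply: sub_rank sL _; rewrite rL r2.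
Qed.

Variables a b c0 d : V.
Hypothesis rab : \rank (col_mx a b) = 2%N.
Hypothesis rcd : \rank (col_mx c0 d) = 2%N.
Hypothesis hab : H *m fz c a b = 0.
Hypothesis hcd : H *m fz c c0 d = 0.
Local Notation L1 := (genmx (col_mx a b)).
Local Notation L2 := (genmx (col_mx c0 d)).
Local Notation X := (L1 + L2)%MS.
Hypothesis neq : ~~ (L1 == L2)%MS.
Hypothesis spr : line_spread_of (fun L => PS L /\ (L <= X)%MS) X.

Lemma PS1 : PS L1. Proof. exact/(PS_iff hn nosing rkH rab). Qed.
Lemma PS2 : PS L2. Proof. exact/(PS_iff hn nosing rkH rcd). Qed.
Lemma L1X : (L1 <= X)%MS. Proof. exact: addsmxSl. Qed.
Lemma L2X : (L2 <= X)%MS. Proof. exact: addsmxSr. Qed.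

Lemma uniqX (l l' : 'M[F]_n.+1) (q : V) : PS l -> PS l' -> (l <= X)%MS -> (l' <= X)%MS ->
  q != 0 -> (q <= l)%MS -> (q <= l')%MS -> (l == l')%MS.
Proof.
move=> pl pl' lX l'X q0 ql ql'.
have pt : is_point (genmx q) by rewrite /is_point genmxE rank_rV q0.
have qX : (genmx q <= X)%MS by rewrite genmxE (submx_trans ql lX).
have [L [[_ _] _ uq]] := spr.2 _ pt qX.
have e1 : (l == L)%MS by apply: uq => //; rewrite genmxE.
have e2 : (l' == L)%MS by apply: uq => //; rewrite genmxE.
case/andP: e1 => e1a e1b; case/andP: e2 => e2a e2b.
by rewrite (submx_trans e1a e2b) (submx_trans e2a e1b).
Qed.

Definition comb4 (x1 x2 x3 x4 : F) : V := x1 *: a + x2 *: b + x3 *: c0 + x4 *: d.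

Lemma aL1 : (a <= L1)%MS. Proof. by rewrite genmxE colSl. Qed.
Lemma bL1 : (b <= L1)%MS. Proof. by rewrite genmxE colSr. Qed.
Lemma cL2 : (c0 <= L2)%MS. Proof. by rewrite genmxE colSl. Qed.
Lemma dL2 : (d <= L2)%MS. Proof. by rewrite genmxE colSr. Qed.

Lemma comb4X x1 x2 x3 x4 : (comb4 x1 x2 x3 x4 <= X)%MS.
Proof.
rewrite /comb4; repeat apply: addmx_sub; apply: scalemx_sub.
- exact: submx_trans aL1 L1X.
- exact: submx_trans bL1 L1X.
- exact: submx_trans cL2 L2X.
- exact: submx_trans dL2 L2X.
Qed.

Lemma indep4 x1 x2 x3 x4 : comb4 x1 x2 x3 x4 = 0 ->
  [/\ x1 = 0, x2 = 0, x3 = 0 & x4 = 0].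
Proof.
move=> e.
set q := x1 *: a + x2 *: b.
have [q0|nq] := eqVneq q 0.
  have [h1 h2] := indep2 rab q0.
  have : x3 *: c0 + x4 *: d = 0.
    by move: e; rewrite /comb4 -/q q0 add0r.
  by case/(indep2 rcd) => h3 h4.
exfalso; move/negP: neq; apply; apply: (uniqX PS1 PS2 L1X L2X nq).
  by rewrite genmxE comb2_sub.
have -> : q = (- x3) *: c0 + (- x4) *: d.
  apply/eqP; rewrite -subr_eq0; apply/eqP; rewrite -[RHS]e /comb4 -/q.
  by rewrite !scaleNr opprD !opprK addrA.
by rewrite genmxE comb2_sub.
Qed.

Lemma inL2 (y : V) : (y <= L2)%MS -> exists g1 g2, y = comb4 0 0 g1 g2.
Proof.
rewrite genmxE => /sub2 [g1 [g2 ->]]; exists g1, g2.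
by rewrite /comb4 !scale0r !add0r.
Qed.

Lemma inL1 (y : V) : (y <= L1)%MS -> exists g1 g2, y = comb4 g1 g2 0 0.
Proof.
rewrite genmxE => /sub2 [g1 [g2 ->]]; exists g1, g2.
by rewrite /comb4 !scale0r !addr0.
Qed.

Lemma comb4_lin al be x1 x2 x3 x4 y1 y2 y3 y4 :
  al *: comb4 x1 x2 x3 x4 + be *: comb4 y1 y2 y3 y4 =
  comb4 (al*x1 + be*y1) (al*x2 + be*y2) (al*x3 + be*y3) (al*x4 + be*y4).
Proof. apply/rowP => j; rewrite !mxE; ring. Qed.

Lemma rank_comb x1 x2 x3 x4 y1 y2 y3 y4 :
  (forall al be, comb4 (al*x1 + be*y1) (al*x2 + be*y2) (al*x3 + be*y3) (al*x4 + be*y4) = 0 ->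
     al = 0 /\ be = 0) ->
  \rank (col_mx (comb4 x1 x2 x3 x4) (comb4 y1 y2 y3 y4)) = 2%N.
Proof.
move=> h; apply/eqP; apply: contraT => /dep2 [al [be [nz e]]].
rewrite comb4_lin in e; have [h1 h2] := h _ _ e.
by rewrite h1 h2 eqxx in nz.
Qed.

Lemma gl (w3 w4 : F) : (w3 != 0) || (w4 != 0) ->
  exists g1 g2, H *m fz c (comb4 1 0 w3 w4) (comb4 0 1 g1 g2) = 0.
Proof.
move=> nw.
set p := comb4 1 0 w3 w4.
have p0 : p != 0.
  by apply/eqP => /indep4 [h _ _ _]; move/eqP: h; rewrite oner_eq0.
have pt : is_point (genmx p) by rewrite /is_point genmxE rank_rV p0.
have pX : (genmx p <= X)%MS by rewrite genmxE comb4X.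
have [l1 [[pl1 l1X] pl uq]] := spr.2 _ pt pX.
rewrite genmxE in pl.
have rl1 : \rank l1 = 2%N by case: pl1.
have cap0 : \rank (l1 :&: L2)%MS = 0%N.
  apply/eqP; rewrite mxrank_eq0; apply: contraT => nz.
  have [i nzr] := my_nzrow nz.
  have e : (l1 == L2)%MS.
    apply: (uniqX pl1 PS2 l1X L2X nzr).
      exact: submx_trans (row_sub i _) (capmxSl _ _).
    exact: submx_trans (row_sub i _) (capmxSr _ _).
  have : (p <= L2)%MS by apply: submx_trans pl (proj1 (andP e)).
  case/inL2 => g1 [g2] e2.
  have : comb4 1 0 (w3 - g1) (w4 - g2) = 0.
    by move: e2; rewrite /p => /eqP; rewrite -subr_eq0 => /eqP <-; apply/rowP => j; rewrite !mxE; ring.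
  by case/indep4 => h _ _ _; move/eqP: h; rewrite oner_eq0.
have rL2 : \rank L2 = 2%N by rewrite genmxE.
have rL1 : \rank L1 = 2%N by rewrite genmxE.
have r4 : \rank (l1 + L2)%MS = 4%N.
  by have := mxrank_sum_cap l1 L2; rewrite cap0 addn0 rl1 rL2.
have rX : (\rank X <= 4)%N.
  by have := mxrank_sum_cap L1 L2; rewrite rL1 rL2; lia.
have Xl : (X <= l1 + L2)%MS.
  by apply: sub_rank; rewrite ?r4 // addsmx_sub l1X L2X.
have bX : (b <= X)%MS by exact: submx_trans bL1 L1X.
have /sub_addsmxP [[u1 u2] /= eb] := submx_trans bX Xl.
have : (u2 *m L2 <= L2)%MS by apply: submxMl.
case/inL2 => g1 [g2] eq2.
exists (- g1), (- g2).
have yl : (comb4 0 1 (- g1) (- g2) <= l1)%MS.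
  have -> : comb4 0 1 (- g1) (- g2) = u1 *m l1.
    apply/eqP; rewrite -subr_eq0; apply/eqP.
    have -> : u1 *m l1 = b - u2 *m L2 by rewrite eb addrK.
    rewrite eq2; apply/rowP => j; rewrite !mxE; ring.
  exact: submxMl.
apply: (PS_vec pl1 pl yl); apply: rank_comb => al be /indep4 [h1 h2 _ _].
by split; move: h1 h2; rewrite !mulr0 !mulr1 ?addr0 ?add0r.
Qed.

Lemma f4 x1 x2 x3 x4 y1 y2 y3 y4 (z : V) :
  f (comb4 x1 x2 x3 x4) (comb4 y1 y2 y3 y4) z =
  (x1*y2 - x2*y1) * f a b z + (x1*y3 - x3*y1) * f a c0 z + (x1*y4 - x4*y1) * f a d z
  + (x2*y3 - x3*y2) * f b c0 z + (x2*y4 - x4*y2) * f b d z + (x3*y4 - x4*y3) * f c0 d z.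
Proof.
rewrite /comb4 !fFE !fF_uuw (fF_swap12 c a b) (fF_swap12 c a c0) (fF_swap12 c a d).
rewrite (fF_swap12 c b c0) (fF_swap12 c b d) (fF_swap12 c c0 d); ring.
Qed.

Hypothesis hF : quad_closed F \/ finite_field F.

Lemma geo_false : False.
Proof.
have nz10 : ((1:F) != 0) || ((0:F) != 0) by rewrite oner_eq0.
have nz01 : ((0:F) != 0) || ((1:F) != 0) by rewrite oner_eq0 orbT.
have [g1 [d1 h1]] := gl nz10.
have [g2 [d2 h2]] := gl nz01.
have algZ : forall u s t,
    H *m fz c (comb4 u 0 s t) (comb4 0 u (s*g1 + t*g2) (s*d1 + t*d2)) = 0.
  move=> u s t; apply/fzP => z zH.
  have zab := (proj2 (fzP c H a b) hab z zH).
  have zcd := (proj2 (fzP c H c0 d) hcd z zH).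
  have z1 := (proj2 (fzP c H _ _) h1 z zH).
  have z2 := (proj2 (fzP c H _ _) h2 z zH).
  rewrite f4 in z1; rewrite f4 in z2; rewrite f4.
  rewrite zab zcd in z1 z2 *.
  have e1 : g1 * f a c0 z + d1 * f a d z = f b c0 z.
    by apply/eqP; rewrite -subr_eq0; apply/eqP; rewrite -z1; ring.
  have e2 : g2 * f a c0 z + d2 * f a d z = f b d z.
    by apply/eqP; rewrite -subr_eq0; apply/eqP; rewrite -z2; ring.
  rewrite -e1 -e2; ring.
have [j0 ne0] : exists j : 'I_n.+1, ~~ ((delta_mx 0 j : V) <= H)%MS.
  apply/existsP; rewrite -negb_forall; apply/negP => /forallP h.
  have : (1%:M <= H)%MS by apply/row_subP => j; rewrite row1; exact: h j.
  by move/mxrankS; rewrite mxrank1 rkH ltnn.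
set e0 : V := delta_mx 0 j0 in ne0.
have [u [s [t [nt q0]]]] := ternary hF (f a b e0)
  (g1 * f a c0 e0 + d1 * f a d e0 - f b c0 e0) (g2 * f a c0 e0 + d2 * f a d e0 - f b d e0)
  (d1 * f c0 d e0) ((d2 - g1) * f c0 d e0) (- g2 * f c0 d e0).
set x := comb4 u 0 s t.
set y := comb4 0 u (s*g1 + t*g2) (s*d1 + t*d2).
have fx0 : fz c x y = 0.
  apply: (outside_H rkH ne0 (algZ u s t)).
  apply/rowP => j; rewrite (ord1 j) -fF_fz f4 mxE -[RHS]q0 /q3; ring.
have [r2|nr2] := eqVneq (\rank (col_mx x y)) 2%N.
  exact: (@fz0_false _ _ c nosing x y r2 fx0).
have [la [mu [nz e]]] := dep2 nr2.
rewrite /x /y comb4_lin in e; case/indep4: e => e1 e2 e3 e4.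
have [u0|nu] := eqVneq u 0; last first.
  move: e1 e2; rewrite !mulr0 addr0 add0r => /eqP; rewrite mulf_eq0 (negbTE nu) orbF => /eqP la0.
  move/eqP; rewrite mulf_eq0 (negbTE nu) orbF => /eqP mu0.
  by rewrite la0 mu0 eqxx in nz.
rewrite u0 in nt.
set gx := comb4 1 0 s t.
set gy := comb4 0 1 (s*g1 + t*g2) (s*d1 + t*d2).
have hG : H *m fz c gx gy = 0 := algZ 1 s t.
have rG : \rank (col_mx gx gy) = 2%N.
  apply: rank_comb => al be /indep4 [h1' h2' _ _].
  by move: h1' h2'; rewrite !mulr0 !mulr1 addr0 add0r.
have PSG := (PS_iff hn nosing rkH rG).2 hG.
have GX : (genmx (col_mx gx gy) <= X)%MS by rewrite genmxE col_mx_sub !comb4X.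
set q := comb4 la mu 0 0.
have q0' : q != 0.
  apply/eqP => /indep4 [la0 mu0 _ _]; by rewrite la0 mu0 eqxx in nz.
have qG : (q <= genmx (col_mx gx gy))%MS.
  have -> : q = la *: gx + mu *: gy.
    rewrite comb4_lin /q; congr comb4; rewrite ?e3 ?e4; ring.
  by rewrite genmxE comb2_sub.
have qL1 : (q <= L1)%MS.
  have -> : q = la *: a + mu *: b by apply/rowP => j; rewrite !mxE; ring.
  by rewrite genmxE comb2_sub.
have eqG := uniqX PSG PS1 GX L1X q0' qG qL1.
have : (gx <= L1)%MS.
  apply: submx_trans (proj1 (andP eqG)).
  by rewrite genmxE colSl.
case/inL1 => al [be] eg.
have : comb4 (1 - al) (- be) s t = 0.
  by move: eg; rewrite /gx => /eqP; rewrite -subr_eq0 => /eqP <-; apply/rowP => j; rewrite !mxE; ring.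
case/indep4 => _ _ s0 t0.
by rewrite s0 t0 eqxx in nt.
Qed.

End Geo.
Unset Implicit Arguments. Set Strict Implicit.
From HB Require Import structures.
From mathcomp Require Import all_boot all_order all_algebra.
Import GRing.Theory.
Local Open Scope ring_scope.

Theorem proposition6p6 (F : fieldType) (n : nat) (c : {ffun tidx n -> F})
    (H : 'M[F]_n.+1) :
  (3 <= n)%N -> c != 0 ->
  (forall L : 'M[F]_n.+1, is_line L -> ~ singular_line c L) ->
  is_hyperplane H ->
  (exists R : 'M[F]_#|{: pidx n}|,
     \rank R = (Mdim n - n).+1 /\
     forall u v : 'rV[F]_n.+1, \rank (col_mx u v) = 2%N ->
       (polar_spread c H (<<col_mx u v>>)%MS <-> (plk u v <= R)%MS)) /\
  (quad_closed F \/ finite_field F -> ~ geometric (polar_spread c H)).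
Proof.
move=> hn _ nosing rkH; split; first exact: part1.
move=> hF geo.
have nzH : H != 0 by rewrite -mxrank_eq0 rkH -lt0n (leq_trans _ hn).
have [i ni] := my_nzrow nzH.
have [b [rab hab]] := exists_line c hn rkH ni (row_sub i H).
set a := row i H in ni rab hab.
have [j nj] : exists j, ~~ (row j H <= col_mx a b)%MS.
  apply/existsP; rewrite -negb_forall; apply/negP => /forallP h.
  have : (H <= col_mx a b)%MS by apply/row_subP => j; exact: h j.
  by move/mxrankS; rewrite rkH rab => h1; have := leq_trans hn h1.
have nzc : row j H != 0 by apply: contraNneq nj => ->; rewrite sub0mx.
have [d [rcd hcd]] := exists_line c hn rkH nzc (row_sub j H).
set c0 := row j H in nj nzc rcd hcd.
have neq : ~~ (<<col_mx a b>> == <<col_mx c0 d>>)%MS.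
  apply/negP => /andP [_ e].
  have : (c0 <= <<col_mx c0 d>>)%MS by rewrite genmxE colSl.
  move/submx_trans/(_ e); rewrite genmxE; exact/negP.
have PS1 := (PS_iff hn nosing rkH rab).2 hab.
have PS2 := (PS_iff hn nosing rkH rcd).2 hcd.
have spr := geo _ _ PS1 PS2 neq.
exact: (geo_false hn nosing rkH rab rcd hab hcd neq spr hF).
Qed.
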